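(* Let $T$ be a complete $L$-theory and $\phi(x,y)$ an $L$-formula. Suppose there are infinite sequences $(a_i:i<\omega)$ and $(b_j:j<\omega)$ in some model of $T$, a natural number $N$ and a set $E\subseteq\{1,\ldots,N\}$ such that (i) for all $i_1<\cdots<i_N<\omega$, $\psi(a_{i_1},\ldots,a_{i_N})$ holds, where $$\psi(x_1,\ldots,x_N):=\neg\Big(\exists y\big(\bigwedge_{k\in E}\phi(x_k,y)\wedge\bigwedge_{k\in\{1,\ldots,N\}\setminus E}\neg\phi(x_k,y)\big)\Big);$$ (ii) $\phi(a_i,b_j)$ holds if and only if $i<j$. Then $T$ has the strict order property.
   Context: Let $\mathcal U$ be the monster model of $T$. A formula $\theta(x,y)$ (possibly in several variables) has the strict order property for $T$ if there is a sequence $(c_i:i<\omega)$ in $\mathcal U$ with $\theta(\mathcal U,c_i)\subsetneqq\theta(\mathcal U,c_{i+1})$ for all $i<\omega$. $T$ has the strict order property (SOP) if some $L$-formula has the strict order property for $T$. *)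

(* Defs.v *)
From mathcomp Require Import all_boot.
Set Implicit Arguments. Unset Strict Implicit. Unset Printing Implicit Defensive.

Record signature := Signature {
  fsym : Type; farity : fsym -> nat;
  rsym : Type; rarity : rsym -> nat }.

Inductive term (L : signature) : Type :=
| tvar : nat -> term L
| tapp : forall f : fsym L, ('I_(farity f) -> term L) -> term L.

Inductive formula (L : signature) : Type :=
| fFalse : formula L
| fEq : term L -> term L -> formula L
| fRel : forall r : rsym L, ('I_(rarity r) -> term L) -> formula L
| fNot : formula L -> formula L
| fAnd : formula L -> formula L -> formula L
| fOr : formula L -> formula L -> formula L
| fImp : formula L -> formula L -> formula L
| fEx : nat -> formula L -> formula L
| fAll : nat -> formula L -> formula L.

Record structure (L : signature) := Structure {
  carrier :> Type;
  witness : carrier;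
  finterp : forall f : fsym L, ('I_(farity f) -> carrier) -> carrier;
  rinterp : forall r : rsym L, ('I_(rarity r) -> carrier) -> Prop }.

Fixpoint eval (L : signature) (M : structure L) (v : nat -> M) (t : term L) : M :=
  match t with
  | tvar k => v k
  | tapp f ts => @finterp L M f (fun i => eval v (ts i))
  end.

Definition upd (T : Type) (v : nat -> T) (x : nat) (a : T) : nat -> T :=
  fun k => if k == x then a else v k.

Fixpoint sat (L : signature) (M : structure L) (v : nat -> M) (phi : formula L) : Prop :=
  match phi with
  | fFalse => False
  | fEq t1 t2 => eval v t1 = eval v t2
  | fRel r ts => @rinterp L M r (fun i => eval v (ts i))
  | fNot p => ~ sat v p
  | fAnd p q => sat v p /\ sat v q
  | fOr p q => sat v p \/ sat v q
  | fImp p q => sat v p -> sat v q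
  | fEx x p => exists a : M, sat (upd v x a) p
  | fAll x p => forall a : M, sat (upd v x a) p
  end.

Fixpoint term_fv (L : signature) (x : nat) (t : term L) : Prop :=
  match t with
  | tvar k => k = x
  | tapp f ts => exists i, term_fv x (ts i)
  end.

Fixpoint free_in (L : signature) (x : nat) (phi : formula L) : Prop :=
  match phi with
  | fFalse => False
  | fEq t1 t2 => term_fv x t1 \/ term_fv x t2
  | fRel r ts => exists i, term_fv x (ts i)
  | fNot p => free_in x p
  | fAnd p q | fOr p q | fImp p q => free_in x p \/ free_in x q
  | fEx y p | fAll y p => y <> x /\ free_in x p
  end.

Definition sentence (L : signature) (phi : formula L) : Prop :=
  forall x, ~ free_in x phi.

Definition models (L : signature) (M : structure L) (T : formula L -> Prop) : Prop :=
  forall phi, T phi -> forall v : nat -> M, sat v phi.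

Definition complete_theory (L : signature) (T : formula L -> Prop) : Prop :=
  [/\ (forall phi, T phi -> sentence phi),
      (exists M : structure L, models M T) &
      (forall s, sentence s ->
         (forall M : structure L, models M T -> forall v : nat -> M, sat v s) \/
         (forall M : structure L, models M T -> forall v : nat -> M, ~ sat v s))].

(* A formula phi(x,y) with x an n-tuple and y an m-tuple of variables:
   x_i is the variable i (i < n), y_j is the variable n + j (j < m),
   and phi has no other free variables. *)
Definition has_vars (L : signature) (phi : formula L) (n m : nat) : Prop :=
  forall x, free_in x phi -> x < n + m.

Definition pair_assign (L : signature) (M : structure L) (n m : nat)
  (a : 'I_n -> M) (b : 'I_m -> M) : nat -> M :=
  fun k => match (insub k : option 'I_n) with
           | Some i => a i
           | None => match (insub (k - n) : option 'I_m) with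
                     | Some j => b j
                     | None => witness M
                     end
           end.

Definition holds2 (L : signature) (M : structure L) (n m : nat)
  (phi : formula L) (a : 'I_n -> M) (b : 'I_m -> M) : Prop :=
  sat (pair_assign a b) phi.

Definition SOP (L : signature) (T : formula L -> Prop) : Prop :=
  exists (n m : nat) (theta : formula L), has_vars theta n m /\
  exists M : structure L, models M T /\
  exists c : nat -> 'I_m -> M, forall i : nat,
    (forall a : 'I_n -> M, holds2 theta a (c i) -> holds2 theta a (c i.+1)) /\
    (exists a : 'I_n -> M, holds2 theta a (c i.+1) /\ ~ holds2 theta a (c i)).

(* Main.v *)
Require Import Defs.
From mathcomp Require Import all_boot.
From mathcomp Require boolp classical_sets filter.
Set Implicit Arguments. Unset Strict Implicit. Unset Printing Implicit Defensive.

Section Syn.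
Variable L : signature.

Lemma eval_ext (M : structure L) (v v' : nat -> M) (t : term L) :
  (forall k, term_fv k t -> v k = v' k) -> eval v t = eval v' t.
Proof.
elim: t => [k|f ts IH] H /=; first by apply: H.
apply: f_equal; apply: boolp.functional_extensionality_dep => i.
by apply: IH => k Hk; apply: H; exists i.
Qed.

Lemma sat_ext (M : structure L) (p : formula L) : forall (v v' : nat -> M),
  (forall k, free_in k p -> v k = v' k) -> (sat v p <-> sat v' p).
Proof.
elim: p => [|t1 t2|r ts|p IH|p IHp q IHq|p IHp q IHq|p IHp q IHq|x p IH|x p IH]
  v v' H /=.
- by [].
- by rewrite (eval_ext (t:=t1) (v':=v')) ?(eval_ext (t:=t2) (v':=v')) //;
    move=> k Hk; apply: H; [right|left].
- have -> : (fun i => eval v (ts i)) = (fun i => eval v' (ts i)) => //.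
  apply: boolp.functional_extensionality_dep => i.
  by apply: eval_ext => k Hk; apply: H; exists i.
- by rewrite (IH v v').
- by rewrite (IHp v v') ?(IHq v v') // => k Hk; apply: H; [right|left].
- by rewrite (IHp v v') ?(IHq v v') // => k Hk; apply: H; [right|left].
- by rewrite (IHp v v') ?(IHq v v') // => k Hk; apply: H; [right|left].
- have E : forall a, sat (upd v x a) p <-> sat (upd v' x a) p.
    move=> a; apply: IH => k Hk; rewrite /upd; case: eqP => // /eqP kx.
    by apply: H; split=> // e; rewrite e eqxx in kx.
  by split=> [[a /E Ha]|[a /E Ha]]; exists a.
- have E : forall a, sat (upd v x a) p <-> sat (upd v' x a) p.
    move=> a; apply: IH => k Hk; rewrite /upd; case: eqP => // /eqP kx.
    by apply: H; split=> // e; rewrite e eqxx in kx.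
  by split=> Ha a; apply/E.
Qed.

Fixpoint tren (s : nat -> nat) (t : term L) : term L :=
  match t with
  | tvar k => tvar L (s k)
  | tapp f ts => @tapp L f (fun i => tren s (ts i))
  end.

Fixpoint fren (B : nat) (s : nat -> nat) (p : formula L) : formula L :=
  match p with
  | fFalse => fFalse L
  | fEq t1 t2 => fEq (tren s t1) (tren s t2)
  | fRel r ts => @fRel L r (fun i => tren s (ts i))
  | fNot q => fNot (fren B s q)
  | fAnd q1 q2 => fAnd (fren B s q1) (fren B s q2)
  | fOr q1 q2 => fOr (fren B s q1) (fren B s q2)
  | fImp q1 q2 => fImp (fren B s q1) (fren B s q2)
  | fEx x q => fEx B (fren B.+1 (upd s x B) q)
  | fAll x q => fAll B (fren B.+1 (upd s x B) q)
  end.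

Lemma eval_tren (M : structure L) (v : nat -> M) s t :
  eval v (tren s t) = eval (fun k => v (s k)) t.
Proof.
elim: t => [k|f ts IH] //=; apply: f_equal.
by apply: boolp.functional_extensionality_dep => i; apply: IH.
Qed.

Lemma tren_fv s t k : term_fv k (tren s t) -> exists j, term_fv j t /\ k = s j.
Proof.
elim: t => [j|f ts IH] /=; first by move=> <-; exists j.
by move=> [i /IH [j [Hj ->]]]; exists j; split=> //; exists i.
Qed.

Lemma fren_sat (M : structure L) (p : formula L) : forall B s (v : nat -> M),
  (forall k, free_in k p -> s k < B) ->
  (sat v (fren B s p) <-> sat (fun k => v (s k)) p).
Proof.
elim: p => [|t1 t2|r ts|p IH|p IHp q IHq|p IHp q IHq|p IHp q IHq|x p IH|x p IH]
  B s v H /=.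
- by [].
- by rewrite !eval_tren.
- have -> : (fun i => eval v (tren s (ts i))) = (fun i => eval (fun k => v (s k)) (ts i)) => //.
  by apply: boolp.functional_extensionality_dep => i; rewrite eval_tren.
- by rewrite (IH B s v).
- by rewrite (IHp B s v) ?(IHq B s v) // => k Hk; apply: H; [right|left].
- by rewrite (IHp B s v) ?(IHq B s v) // => k Hk; apply: H; [right|left].
- by rewrite (IHp B s v) ?(IHq B s v) // => k Hk; apply: H; [right|left].
- have H' : forall k, free_in k p -> upd s x B k < B.+1.
    move=> k Hk; rewrite /upd; case: eqP => [_|/eqP kx]; first by [].
    by apply: ltnW; apply: H; split=> // e; rewrite e eqxx in kx.
  have E : forall a, sat (fun k => upd v B a (upd s x B k)) p <->
                     sat (upd (fun k => v (s k)) x a) p.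
    move=> a; apply: sat_ext => k Hk /=; rewrite /upd.
    case: (k =P x) => [e|/eqP kx]; first by subst k; rewrite !eqxx.
    have : s k < B by apply: H; split=> // e; rewrite e eqxx in kx.
    by case: eqP => // ->; rewrite ltnn.
  by split=> [[a Ha]|[a Ha]]; exists a; [apply/E/(IH _ _ _ H')|apply/(IH _ _ _ H')/E].
- have H' : forall k, free_in k p -> upd s x B k < B.+1.
    move=> k Hk; rewrite /upd; case: eqP => [_|/eqP kx]; first by [].
    by apply: ltnW; apply: H; split=> // e; rewrite e eqxx in kx.
  have E : forall a, sat (fun k => upd v B a (upd s x B k)) p <->
                     sat (upd (fun k => v (s k)) x a) p.
    move=> a; apply: sat_ext => k Hk /=; rewrite /upd.
    case: (k =P x) => [e|/eqP kx]; first by subst k; rewrite !eqxx.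
    have : s k < B by apply: H; split=> // e; rewrite e eqxx in kx.
    by case: eqP => // ->; rewrite ltnn.
  by split=> Ha a; [apply/E/(IH _ _ _ H')|apply/(IH _ _ _ H')/E].
Qed.

Lemma fren_free (p : formula L) : forall B s k,
  free_in k (fren B s p) -> exists j, free_in j p /\ k = s j.
Proof.
elim: p => [|t1 t2|r ts|p IH|p IHp q IHq|p IHp q IHq|p IHp q IHq|x p IH|x p IH]
  B s k /=.
- by [].
- by case=> /tren_fv [j [Hj ->]]; exists j; split=> //; [left|right].
- by case=> i /tren_fv [j [Hj ->]]; exists j; split=> //; exists i.
- exact: IH.
- by case=> [/IHp|/IHq] [j [Hj ->]]; exists j; split=> //; [left|right].
- by case=> [/IHp|/IHq] [j [Hj ->]]; exists j; split=> //; [left|right].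
- by case=> [/IHp|/IHq] [j [Hj ->]]; exists j; split=> //; [left|right].
- move=> [Bk /IH [j [Hj]]]; rewrite /upd; case: eqP => [_ e|/eqP jx ->].
    by case: Bk.
  by exists j; split=> //; split=> // e; rewrite e eqxx in jx.
- move=> [Bk /IH [j [Hj]]]; rewrite /upd; case: eqP => [_ e|/eqP jx ->].
    by case: Bk.
  by exists j; split=> //; split=> // e; rewrite e eqxx in jx.
Qed.

Definition fTrue : formula L := fNot (fFalse L).

Definition fconj (F : nat -> formula L) (ks : seq nat) : formula L :=
  foldr (fun k acc => fAnd (F k) acc) fTrue ks.

Lemma fconj_sat (M : structure L) (v : nat -> M) F ks :
  sat v (fconj F ks) <-> (forall k, k \in ks -> sat v (F k)).
Proof.
elim: ks => [|k ks IH] /=; first by split=> // _ k.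
rewrite IH; split=> [[H1 H2] j|H]; first by rewrite inE => /orP [/eqP ->|/H2].
by split=> [|j Hj]; apply: H; rewrite inE ?eqxx // Hj orbT.
Qed.

Lemma fconj_free F ks k : free_in k (fconj F ks) -> exists2 j, j \in ks & free_in k (F j).
Proof.
elim: ks => [|j ks IH] //=; case=> [H|/IH [i Hi H]]; first by exists j; rewrite ?inE ?eqxx.
by exists i; rewrite // inE Hi orbT.
Qed.

Definition flit (b : bool) (p : formula L) := if b then p else fNot p.

Lemma flit_sat (M : structure L) (v : nat -> M) b p :
  sat v (flit b p) <-> (sat v p <-> b).
Proof.
case: b => /=; split=> [H|H].
- by split.
- exact/H.
- by split=> // /H.
- by move=> /H.
Qed.


Lemma flit_free b p k : free_in k (flit b p) -> free_in k p.
Proof. by case: b. Qed.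

End Syn.

Section Ult.
Variable L : signature.
Variable M : structure L.
Variable U : (nat -> Prop) -> Prop.
Hypothesis US : forall A B : nat -> Prop, (forall k, A k -> B k) -> U A -> U B.
Hypothesis UI : forall A B : nat -> Prop, U A -> U B -> U (fun k => A k /\ B k).
Hypothesis U0 : ~ U (fun _ => False).
Hypothesis UU : forall A : nat -> Prop, U A \/ U (fun k => ~ A k).
Hypothesis Ucof : forall t, U (fun k => t < k).

Lemma UT : U (fun _ => True).
Proof. by apply: (US _ (Ucof 0)). Qed.

Lemma Uiff (A B : nat -> Prop) : U (fun k => A k <-> B k) -> (U A <-> U B).
Proof.
move=> H; split=> H2; apply: US (UI H H2) => k [E X]; exact/E.
Qed.

Lemma UN (A : nat -> Prop) : ~ U A <-> U (fun k => ~ A k).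
Proof.
split; first by case: (UU A).
by move=> H1 H2; apply: U0; apply: US (UI H1 H2) => k [].
Qed.

Lemma Ufin n (A : 'I_n -> nat -> Prop) : (forall i, U (A i)) -> U (fun k => forall i, A i k).
Proof.
elim: n A => [|n IH] A H.
  by apply: US UT => k _ [].
have H1 := IH (fun i => A (lift ord0 i)) (fun i => H _).
apply: US (UI (H ord0) H1) => k [H2 H3] i.
by case: (unliftP ord0 i) => [j ->|->].
Qed.

Definition eqU (f g : nat -> M) := U (fun k => f k = g k).

Lemma eqU_refl f : eqU f f. Proof. by apply: US UT. Qed.
Lemma eqU_sym f g : eqU f g -> eqU g f. Proof. by apply: US. Qed.
Lemma eqU_trans f g h : eqU f g -> eqU g h -> eqU f h.
Proof. by move=> H1 H2; apply: US (UI H1 H2) => k [-> ->]. Qed.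

Definition UC := {P : (nat -> M) -> Prop | exists f, P = eqU f}.

Definition cls (f : nat -> M) : UC := exist _ (eqU f) (ex_intro _ f erefl).

Lemma cls_eq f g : cls f = cls g <-> eqU f g.
Proof.
split=> [E|H].
  have : proj1_sig (cls f) g by rewrite E /=; apply: eqU_refl.
  exact.
have E : eqU f = eqU g.
  apply: boolp.functional_extensionality_dep => h.
  apply: boolp.propositional_extensionality; split=> H2.
    exact: eqU_trans (eqU_sym H) H2.
  exact: eqU_trans H H2.
rewrite /cls; move: (ex_intro _ f _) (ex_intro _ g _); rewrite E => p1 p2.
by congr exist; apply: boolp.Prop_irrelevance.
Qed.

Definition rep (x : UC) : nat -> M := proj1_sig (boolp.constructive_indefinite_description (proj2_sig x)).

Lemma cls_rep x : cls (rep x) = x.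
Proof.
rewrite /rep; case: boolp.constructive_indefinite_description => f /= Hf.
case: x Hf => P HP /= Hf; subst P.
by congr exist; apply: boolp.Prop_irrelevance.
Qed.

Lemma rep_cls f : eqU (rep (cls f)) f.
Proof. by apply/cls_eq; rewrite cls_rep. Qed.

Definition Ustruct : structure L :=
  @Structure L UC (cls (fun _ => witness M))
    (fun f args => cls (fun k => @finterp L M f (fun i => rep (args i) k)))
    (fun r args => U (fun k => @rinterp L M r (fun i => rep (args i) k))).

Definition valU (V : nat -> nat -> M) : nat -> Ustruct := fun j => cls (fun k => V k j).

Lemma los_term (V : nat -> nat -> M) (t : term L) :
  eval (valU V) t = cls (fun k => eval (V k) t).
Proof.
elim: t => [j|f ts IH] //=.
apply/cls_eq.
have H : forall i, eqU (rep (eval (valU V) (ts i))) (fun k => eval (V k) (ts i)).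
  by move=> i; rewrite IH; apply: rep_cls.
apply: US (Ufin H) => k Hk /=.
by congr (finterp _); apply: boolp.functional_extensionality_dep => i; rewrite Hk.
Qed.

Lemma los (p : formula L) : forall V : nat -> nat -> M,
  sat (valU V) p <-> U (fun k => sat (V k) p).
Proof.
elim: p => [|t1 t2|r ts|p IH|p IHp q IHq|p IHp q IHq|p IHp q IHq|x p IH|x p IH] V /=.
- by split=> // H; apply: U0.
- by rewrite !los_term cls_eq.
- apply: Uiff.
  have H : forall i, eqU (rep (eval (valU V) (ts i))) (fun k => eval (V k) (ts i)).
    by move=> i; rewrite los_term; apply: rep_cls.
  apply: US (Ufin H) => k Hk /=.
  suff -> : (fun i => rep (eval (valU V) (ts i)) k) = (fun i => eval (V k) (ts i)) by [].
  by apply: boolp.functional_extensionality_dep => i; rewrite Hk.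
- by rewrite IH UN.
- rewrite IHp IHq; split=> [[H1 H2]|H]; first exact: UI.
  by split; apply: US H => k [].
- rewrite IHp IHq; split=> [[H1|H1]|H].
  + by apply: US H1 => k; left.
  + by apply: US H1 => k; right.
  + case: (UU (fun k => sat (V k) p)) => H1; first by left.
    by right; apply: US (UI H H1) => k [[]].
- rewrite IHp IHq; split=> [H|H H1].
  + case: (UU (fun k => sat (V k) p)) => H1.
      by apply: US (H H1) => k.
    by apply: US H1 => k H2 H3.
  + by apply: US (UI H H1) => k [H2 /H2].
- have E : forall a, upd (valU V) x a = valU (fun k => upd (V k) x (rep a k)).
    move=> a; apply: boolp.functional_extensionality_dep => j.
    rewrite /upd /valU; case: (j == x) => //.
    by rewrite -{1}(cls_rep a).
  split=> [[a]|H].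
    rewrite E IH => H; apply: US H => k H; by exists (rep a k).
  pose c k := match boolp.pselect (exists a, sat (upd (V k) x a) p) with
              | left Hx => proj1_sig (boolp.constructive_indefinite_description Hx)
              | right _ => witness M end.
  exists (cls c); rewrite E IH.
  apply: US (UI H (rep_cls c)) => k [[a Ha] ->].
  rewrite /c; case: boolp.pselect => [Hx|[]]; last by exists a.
  by case: boolp.constructive_indefinite_description.
- have E : forall a, upd (valU V) x a = valU (fun k => upd (V k) x (rep a k)).
    move=> a; apply: boolp.functional_extensionality_dep => j.
    rewrite /upd /valU; case: (j == x) => //.
    by rewrite -{1}(cls_rep a).
  split=> [H|H a]; last first.
    by rewrite E IH; apply: US H => k; apply.
  apply: boolp.contrapT => /UN H1.
  pose c k := match boolp.pselect (exists a, ~ sat (upd (V k) x a) p) with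
              | left Hx => proj1_sig (boolp.constructive_indefinite_description Hx)
              | right _ => witness M end.
  have := H (cls c); rewrite E IH => H2.
  apply: U0; apply: US (UI H2 (UI H1 (rep_cls c))) => k [H3 [H4 H5]].
  move: H3; rewrite H5 /c; case: boolp.pselect => [Hx|Hn].
    by case: boolp.constructive_indefinite_description.
  by case: H4 => a; apply: boolp.contrapT => Ha; apply: Hn; exists a.
Qed.

End Ult.

Definition incr (g : nat -> nat) := forall i j, i < j -> g i < g j.
Definition good N (s : seq nat) := (size s == N) && sorted ltn s.

Lemma incr_step g : (forall i, g i < g i.+1) -> incr g.
Proof.
move=> H i j; apply: (@homo_ltn _ g (fun a b => a < b)) => //.
by move=> y x z; apply: ltn_trans.
Qed.

Lemma incr_comp g h : incr g -> incr h -> incr (g \o h).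
Proof. by move=> Hg Hh i j /Hh /Hg. Qed.

Lemma good_map N g s : incr g -> good N s -> good N (map g s).
Proof.
move=> Hg /andP [Hs Ho]; rewrite /good size_map Hs /=.
exact: homo_sorted Ho.
Qed.

Definition homog N (P : seq nat -> Prop) (g : nat -> nat) :=
  exists b : bool, forall s, good N s -> (P (map g s) <-> b).

Lemma homog_comp N P g h : incr h -> homog N P g -> homog N P (g \o h).
Proof. by move=> Hh [b Hb]; exists b => s Hs; rewrite map_comp; apply: Hb; apply: good_map. Qed.

Lemma cid (A : Type) (P : A -> Prop) : (exists x, P x) -> {x | P x}.
Proof. exact: boolp.constructive_indefinite_description. Qed.

Theorem ramsey N : forall P : seq nat -> Prop, exists g, incr g /\ homog N P g.
Proof.
elim: N => [|N IH] P.
  exists id; split=> //; case: (boolp.pselect (P [::])) => H.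
    by exists true => s /andP [/eqP/size0nil -> _] /=.
  by exists false => s /andP [/eqP/size0nil -> _] /=; split=> // /H.
pose Q (h : nat -> nat) s := P (h 0 :: map (h \o succn) s).
have IH' : forall h, exists gb : (nat -> nat) * bool, incr gb.1 /\
   forall s, good N s -> (Q h (map gb.1 s) <-> gb.2).
  by move=> h; have [g [Hg [b Hb]]] := IH (Q h); exists (g, b).
pose gb h := proj1_sig (cid (IH' h)).
have gbP h : incr (gb h).1 /\ forall s, good N s -> (Q h (map (gb h).1 s) <-> (gb h).2).
  by rewrite /gb; case: cid.
pose D h := succn \o (gb h).1.
have DI h : incr (D h) by move=> i j /(proj1 (gbP h)).
pose fix hs i := if i is i'.+1 then hs i' \o D (hs i') else id.
pose bs i := (gb (hs i)).2.
pose xs i := hs i 0.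
have hsI : forall i, incr (hs i).
  by elim=> [|i IHi] //=; apply: incr_comp.
have xsI : incr xs.
  by apply: incr_step => i; rewrite /xs /=; apply: hsI.
pose fix comp i j := if j is j'.+1 then comp i j' \o D (hs (i + j')) else id.
have compI : forall i j, incr (comp i j).
  by move=> i; elim=> [|j IHj] //=; apply: incr_comp.
have hs_comp : forall i j k, hs (i + j) k = hs i (comp i j k).
  move=> i; elim=> [|j IHj] k; first by rewrite addn0.
  by rewrite addnS /= IHj.
pose rho i j := comp i.+1 j 0.
have rhoI : forall i, incr (rho i).
  move=> i; apply: incr_step => j; rewrite /rho /=.
  by apply: compI.
have key : forall i s0, good N s0 ->
    (P (xs i :: map (fun j => xs (i.+1 + j)) s0) <-> bs i).
  move=> i s0 Hs0.
  have -> : map (fun j => xs (i.+1 + j)) s0 = map (hs i \o succn) (map (gb (hs i)).1 (map (rho i) s0)).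
    rewrite -!map_comp; apply: eq_map => j /=.
    by rewrite /xs hs_comp.
  by apply: (proj2 (gbP (hs i))); apply: good_map.
have [b Hb] : exists b, forall t, exists i, t < i /\ bs i = b.
  case: (boolp.pselect (forall t, exists i, t < i /\ bs i = true)) => H; first by exists true.
  exists false => t.
  have [t0 Ht0] : exists t0, forall i, t0 < i -> bs i <> true.
    apply: boolp.contrapT => H1; apply: H => t1.
    apply: boolp.contrapT => H2; apply: H1; exists t1 => i Hi Hbi; apply: H2.
    by exists i.
  exists (maxn t t0).+1; split; first by rewrite ltnS leq_maxl.
  case E: (bs _) => //; exfalso; apply: (Ht0 _ _ E); by rewrite ltnS leq_maxr.
pose ch t := proj1_sig (cid (Hb t)).
have chP t : t < ch t /\ bs (ch t) = b by rewrite /ch; case: cid.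
pose fix sel k := if k is k'.+1 then ch (sel k') else ch 0.
have selI : incr sel by apply: incr_step => k /=; apply: (proj1 (chP _)).
exists (xs \o sel); split; first exact: incr_comp.
exists b => s /andP [/eqP Hsz Hso].
case: s Hsz Hso => [|x0 s1] //= [Hsz] Hso.
have Hall : all (fun j => x0 < j) s1.
  exact: (order_path_min ltn_trans Hso).
have Hso1 : sorted ltn s1 by apply: path_sorted Hso.
pose i := sel x0.
pose s0 := map (fun j => sel j - i.+1) s1.
have -> : map (xs \o sel) s1 = map (fun j => xs (i.+1 + j)) s0.
  rewrite -map_comp; apply/eq_in_map => j Hj /=.
  rewrite subnKC //.
  by apply: selI; move/allP: Hall => /(_ j Hj).
have <- : bs i = b by rewrite /i; case: (x0) => [|k]; apply: (proj2 (chP _)).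
apply: key; rewrite /good size_map Hsz eqxx /=.
apply: (homo_sorted_in (P := fun j => x0 < j) (e := ltn) _ Hall Hso1) => a c Ha Hc Hac.
rewrite /= ltn_sub2r //; last by apply: selI.
exact: leq_ltn_trans (selI x0 a Ha) (selI a c Hac).
Qed.

Fixpoint inv (z : seq bool) : nat :=
  if z is x :: z' then (if x then 0 else count id z') + inv z' else 0.


Lemma inv_swap u v : inv (u ++ true :: false :: v) < inv (u ++ false :: true :: v).
Proof.
elim: u => [|x u IH] /=.
  by rewrite !add0n -addnA add1n ltnSn.
have -> : count id (u ++ true :: false :: v) = count id (u ++ false :: true :: v).
  by rewrite !count_cat /= addnCA.
by rewrite ltn_add2l.
Qed.

Definition geb (x y : bool) := y ==> x.

Lemma decomp z : ~~ sorted geb z -> exists u v, z = u ++ false :: true :: v.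
Proof.
elim: z => [|x z IH] //=.
move: IH; case: z => [|y z] IH //=.
rewrite negb_and => /orP [H|/IH [u [v ->]]].
  by clear IH; move: H; case: x; case: y => //= _; exists [::], z.
by exists (x :: u), v.
Qed.

Lemma find_unreal N (RR : seq bool -> Prop) :
  (forall z, size z = N -> sorted geb z -> RR z) ->
  forall W z, inv z <= W -> size z = N -> ~ RR z ->
  exists u v, [/\ size (u ++ false :: true :: v) = N,
                 ~ RR (u ++ false :: true :: v) & RR (u ++ true :: false :: v)].
Proof.
move=> Hs; elim=> [|W IHW] z Hi Hz Hn.
  case: (boolP (sorted geb z)) => [/(Hs _ Hz) /Hn []|/decomp [u [v E]]].
  by have := inv_swap u v; move: Hi; rewrite E leqn0 => /eqP ->.
case: (boolP (sorted geb z)) => [/(Hs _ Hz) /Hn []|/decomp [u [v E]]].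
subst z.
case: (boolp.pselect (RR (u ++ true :: false :: v))) => H.
  by exists u, v.
apply: (IHW (u ++ true :: false :: v)) => //.
  by rewrite -ltnS; apply: leq_trans Hi; apply: inv_swap.
by rewrite -Hz !size_cat.
Qed.

Lemma pa_lt L (M : structure L) n m (A : 'I_n -> M) (Bv : 'I_m -> M) j (H : j < n) :
  pair_assign A Bv j = A (Ordinal H).
Proof. by rewrite /pair_assign insubT. Qed.

Lemma pa_ge L (M : structure L) n m (A : 'I_n -> M) (Bv : 'I_m -> M) j
  (H1 : n <= j) (H2 : j - n < m) : pair_assign A Bv j = Bv (Ordinal H2).
Proof.
rewrite /pair_assign insubF; last by rewrite ltnNge H1.
by rewrite insubT.
Qed.

Lemma ord_irr (T : Type) m (f : 'I_m -> T) i (H1 H2 : i < m) : f (Ordinal H1) = f (Ordinal H2).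
Proof. by congr f; apply: val_inj. Qed.

Lemma sorted_iota_map (f : nat -> nat) N : forall i,
  (forall k, i <= k -> k.+1 < i + N -> f k < f k.+1) -> sorted ltn (map f (iota i N)).
Proof.
elim: N => [|N IH] i H //=.
case: N IH H => [|N] IH H //=.
apply/andP; split.
  by apply: H => //; rewrite addnS ltnS addnS ltnS leq_addr.
have := IH i.+1; rewrite /=; apply=> k Hk Hk2; apply: H; first exact: ltnW.
by rewrite addnS -addSn.
Qed.

Lemma nth_mid (T : Type) (x0 : T) (u v : seq T) c1 c2 d1 d2 k :
  k != size u -> k != (size u).+1 ->
  nth x0 (u ++ c1 :: c2 :: v) k = nth x0 (u ++ d1 :: d2 :: v) k.
Proof.
move=> H1 H2; rewrite !nth_cat; case: ifP => // Hk.
have : 1 < k - size u.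
  by rewrite ltn_subRL addn1 ltn_neqAle eq_sym H2 ltn_neqAle eq_sym H1 leqNgt Hk.
by case: (k - size u) => [|[|j]].
Qed.

Lemma nth_p (T : Type) (x0 : T) (u v : seq T) c1 c2 :
  nth x0 (u ++ c1 :: c2 :: v) (size u) = c1.
Proof. by rewrite nth_cat ltnn subnn. Qed.

Lemma nth_p1 (T : Type) (x0 : T) (u v : seq T) c1 c2 :
  nth x0 (u ++ c1 :: c2 :: v) (size u).+1 = c2.
Proof. by rewrite nth_cat ltnNge leqnSn /= subSnn. Qed.

Section Main.
Variables (L : signature) (n m : nat) (phi : formula L) (M : structure L)
  (a : nat -> 'I_n -> M) (b : nat -> 'I_m -> M).
Hypothesis Hvars : has_vars phi n m.
Hypothesis Hab : forall i j, holds2 phi (a i) (b j) <-> i < j.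

Definition Real (z : seq bool) (s : seq nat) := exists y : 'I_m -> M,
  forall k, k < size z -> (holds2 phi (a (nth 0 s k)) y <-> nth false z k).

Lemma npos : 0 < n.
Proof.
case: (posnP n) => [n0|//].
have E : a 0 = a 1.
  apply: boolp.functional_extensionality_dep => i; exfalso.
  have : (i : nat) < 0 by rewrite -[X in _ < X]n0 ltn_ord.
  by [].
have H0 : holds2 phi (a 0) (b 1) by apply/Hab.
by rewrite E in H0; have := proj1 (Hab 1 1) H0.
Qed.


Lemma incr_lt g i j : incr g -> (g i < g j) = (i < j).
Proof.
move=> Hg; case: (ltnP i j) => [/Hg //|]; rewrite leq_eqVlt => /orP [/eqP ->|/Hg H].
  by rewrite ltnn.
by apply/negbTE; rewrite -leqNgt ltnW.
Qed.

Lemma nth_mapg g N k : k < N -> nth 0 (map g (iota 0 N)) k = g k.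
Proof. by move=> Hk; rewrite (nth_map 0) ?size_iota // nth_iota. Qed.

Lemma real_sorted g z N : incr g -> sorted geb z -> size z = N ->
  Real z (map g (iota 0 N)).
Proof.
move=> Hg Hs Hz; pose a0 := find negb z.
exists (b (g a0)) => k Hk; rewrite nth_mapg -?Hz // Hab incr_lt //.
case: (ltnP k a0) => Hka.
  by have := before_find false Hka => /negbFE ->.
have Ha0 : a0 < size z by apply: leq_ltn_trans Hk.
have Hz0 : nth false z a0 = false.
  by apply/negbTE; apply: (nth_find false); rewrite has_find.
suff -> : nth false z k = false by [].
move: Hka; rewrite leq_eqVlt => /orP [/eqP <-//|Hlt].
have Htr : transitive geb by move=> y x w; rewrite /geb => H1 H2; apply/implyP => /(implyP H2) /(implyP H1).
have := sorted_ltn_nth Htr false Hs; move=> /(_ a0 k Ha0 Hk Hlt).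
by rewrite /geb Hz0 implybF => /negbTE.
Qed.

Definition sig (k j : nat) := if j < n then m + (k * n + j) else j - n.

Definition theta N p (zl : seq bool) : formula L :=
  fconj (fun k => flit (nth false zl k) (fren (m + N * n) (sig k) phi))
        [seq k <- iota 0 N | k != p.+1].

Lemma sig_bound N k j : k < N -> j < n + m -> sig k j < m + N * n.
Proof.
move=> Hk Hj; rewrite /sig; case: ifP => Hjn.
  rewrite ltn_add2l; apply: (@leq_trans (k.+1 * n)); last by rewrite leq_mul2r Hk orbT.
  by rewrite mulSn addnC ltn_add2r.
by apply: leq_trans (leq_addr _ _); rewrite ltn_subLR // leqNgt Hjn.
Qed.

Lemma theta_vars N p zl : has_vars (theta N p zl) m (N * n).
Proof.
move=> x /fconj_free [k]; rewrite mem_filter mem_iota add0n => /andP [_ Hk].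
move=> /flit_free /fren_free [j [Hj ->]].
exact: sig_bound (Hvars Hj).
Qed.

Lemma theta_sat N p zl (Y : 'I_m -> M) (Pn : nat -> M) :
  holds2 (theta N p zl) Y (fun o : 'I_(N * n) => Pn o) <->
  (forall k, k < N -> k != p.+1 ->
     (holds2 phi (fun i : 'I_n => Pn (k * n + i)) Y <-> nth false zl k)).
Proof.
rewrite /holds2 /theta fconj_sat.
have E : forall k, k < N -> (sat (pair_assign Y (fun o : 'I_(N * n) => Pn o)) (fren (m + N * n) (sig k) phi) <->
      sat (pair_assign (fun i : 'I_n => Pn (k * n + i)) Y) phi).
  move=> k Hk; rewrite fren_sat; last by move=> j /Hvars Hj; apply: sig_bound.
  apply: sat_ext => j /Hvars Hj; rewrite /sig.
  case: (ltnP j n) => Hjn.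
    have H1 : m <= m + (k * n + j) by apply: leq_addr.
    have H2 : m + (k * n + j) - m < N * n.
      by rewrite addKn -(ltn_add2l m); have := sig_bound Hk Hj; rewrite /sig Hjn.
    by rewrite (pa_ge _ _ H1 H2) (pa_lt _ _ Hjn) /= addKn.
  have H2 : j - n < m by rewrite ltn_subLR.
  by rewrite (pa_lt _ _ H2) (pa_ge _ _ Hjn H2).
split=> [H k Hk Hkp|H k].
  have := H k; rewrite mem_filter mem_iota add0n Hk Hkp => /(_ isT).
  by rewrite flit_sat E.
rewrite mem_filter mem_iota add0n => /andP [Hkp Hk].
by rewrite flit_sat E //; apply: H.
Qed.

Section Chain.
Variables (g : nat -> nat) (u v : seq bool).
Hypothesis Hg : incr g.
Let p := size u.
Let N := size (u ++ false :: true :: v).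
Hypothesis Hunreal : forall s, good N s -> ~ Real (u ++ false :: true :: v) (map g s).
Hypothesis Hreal : forall s, good N s -> Real (u ++ true :: false :: v) (map g s).
Let zl := u ++ true :: true :: v.

Definition hh K t k := if k < p then k else if k == p then p + K - t else k + K.

Definition Pn K t (q : nat) : M := a (g (hh K t (q %/ n))) (Ordinal (ltn_pmod q npos)).

Lemma Pn_slot K t k : (fun i : 'I_n => Pn K t (k * n + i)) = a (g (hh K t k)).
Proof.
apply: boolp.functional_extensionality_dep => i; rewrite /Pn.
rewrite divnMDl ?npos // divn_small // addn0.
by congr (a _); apply: val_inj; rewrite /= modnMDl modn_small.
Qed.

Definition Cset K t (Y : 'I_m -> M) := forall k, k < N -> k != p.+1 ->
  (holds2 phi (a (g (hh K t k))) Y <-> nth false zl k).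

Lemma Cset_theta K t Y : holds2 (theta N p zl) Y (fun o : 'I_(N * n) => Pn K t o) <-> Cset K t Y.
Proof.
rewrite theta_sat /Cset; split=> H k Hk Hkp; have := H k Hk Hkp; by rewrite Pn_slot.
Qed.

Lemma chain_step K t : t < K ->
  (forall Y, Cset K t Y -> Cset K t.+1 Y) /\ (exists Y, Cset K t.+1 Y /\ ~ Cset K t Y).
Proof.
move=> HtK.
have HN : N = p + (size v).+2 by rewrite /N size_cat.
pose r := p + K - t.+1.
have Hr : r.+1 = p + K - t by rewrite /r subnSK // ltn_addl.
have Hpr : p <= r by rewrite /r -addnBA // leq_addr.
pose f k := if k < p then k else if k == p then r else if k == p.+1 then r.+1 else k + K.
have Hs : good N (map f (iota 0 N)).
  rewrite /good size_map size_iota eqxx /=.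
  apply: sorted_iota_map => k _; rewrite add0n => Hk.
  rewrite /f; case: (ltnP k.+1 p) => H1.
    by rewrite (ltn_trans (ltnSn k) H1).
  case: (ltnP k p) => H2.
    have E : k.+1 = p by apply/eqP; rewrite eqn_leq H1 H2.
    by rewrite E eqxx.
  case: (eqVneq k p) => [Ekp|Hkp2].
    by rewrite Ekp (gtn_eqF (ltnSn p)) eqxx.
  have Hk1p : (k.+1 == p) = false by apply: gtn_eqF; rewrite ltnS.
  rewrite Hk1p eqSS (negbTE Hkp2).
  case: (eqVneq k p.+1) => [Ekp|Hk3].
    rewrite Ekp Hr; apply: (@leq_ltn_trans (p + K)); first by apply: leq_subr.
    by rewrite addSn ltnS addSn leqnSn.
  by rewrite addSn.
have fK : forall k, k != p -> k != p.+1 -> f k = hh K t k /\ f k = hh K t.+1 k.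
  move=> k H1 H2; rewrite /f /hh; case: (k < p) => //.
  by rewrite (negbTE H1) (negbTE H2).
have nthK : forall k, k < N -> nth 0 (map g (map f (iota 0 N))) k = g (f k).
  by move=> k Hk; rewrite -map_comp (nth_map 0) ?size_iota // nth_iota.
have fp : f p = r by rewrite /f ltnn eqxx.
have fp1 : f p.+1 = r.+1 by rewrite /f ltnNge leqnSn /= (gtn_eqF (ltnSn p)) eqxx.
have hp : hh K t p = r.+1 by rewrite /hh ltnn eqxx Hr.
have hp1 : hh K t.+1 p = r by rewrite /hh ltnn eqxx.
have Hp1N : p.+1 < N by rewrite HN addnS ltnS addnS ltnS leq_addr.
have HpN : p < N by apply: ltn_trans Hp1N.
have zlp : nth false zl p = true by rewrite /zl nth_p.
split.
  move=> Y HY k Hk Hkp.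
  case: (eqVneq k p) => [->|Hkp2]; last first.
    by have [E1 E2] := fK k Hkp2 Hkp; rewrite -E2 E1; apply: HY.
  rewrite zlp hp1; split=> // _.
  apply: boolp.contrapT => Hn.
  apply: (Hunreal Hs); exists Y => k' Hk'.
  rewrite nthK //.
  case: (eqVneq k' p) => [->|Hk'p].
    by rewrite fp nth_p; split=> // H; case: Hn.
  case: (eqVneq k' p.+1) => [->|Hk'p1].
    rewrite fp1 nth_p1 -hp; split=> // _.
    by apply/(HY p HpN); rewrite ?zlp // neq_ltn ltnSn.
  have [-> _] := fK k' Hk'p Hk'p1.
  by rewrite (HY k' Hk' Hk'p1) /zl (@nth_mid _ false u v true true false true k' Hk'p Hk'p1).
have [Y HY] := Hreal Hs.
have HY' : forall k, k < N -> (holds2 phi (a (g (f k))) Y <-> nth false (u ++ true :: false :: v) k).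
  by move=> k Hk; rewrite -nthK //; apply: HY; rewrite size_cat /= -(size_cat u (false :: true :: v)).
exists Y; split.
  move=> k Hk Hkp; case: (eqVneq k p) => [->|Hkp2].
    by rewrite zlp hp1 -fp HY' // nth_p.
  have [_ <-] := fK k Hkp2 Hkp.
  by rewrite HY' // /zl (@nth_mid _ false u v true true true false k Hkp2 Hkp).
have Hpp : p != p.+1 by rewrite neq_ltn ltnSn.
move=> HC; have := HC p HpN Hpp; rewrite zlp hp -fp1 HY' //.
by rewrite nth_p1 => -[_ /(_ isT)].
Qed.

End Chain.

End Main.

Lemma ultra_exists : exists U : (nat -> Prop) -> Prop,
  [/\ (forall A B : nat -> Prop, (forall k, A k -> B k) -> U A -> U B),
      (forall A B : nat -> Prop, U A -> U B -> U (fun k => A k /\ B k)),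
      ~ U (fun _ => False),
      (forall A : nat -> Prop, U A \/ U (fun k => ~ A k)) &
      (forall t, U (fun k => t < k))].
Proof.
pose F := fun A : nat -> Prop => exists t, forall k, t < k -> A k.
have FF : filter.Filter F.
  split.
  - by exists 0.
  - move=> A B [t1 H1] [t2 H2]; exists (maxn t1 t2) => k Hk; split.
      by apply: H1; apply: leq_ltn_trans Hk; apply: leq_maxl.
    by apply: H2; apply: leq_ltn_trans Hk; apply: leq_maxr.
  - by move=> P Q PQ [t H]; exists t => k /H /PQ.
have PF : filter.ProperFilter F.
  apply: (@filter.Build_ProperFilter_ex _ F _ FF).
  by move=> P [t H]; exists t.+1; exact: H.
have [G [UG FG]] := filter.ultraFilterLemma PF.
exists G; split.
- by move=> A B AB; apply: filter.filterS.
- by move=> A B; apply: filter.filterI.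
- exact: (@filter.filter_not_empty _ G _).
- by move=> A; apply: filter.in_ultra_setVsetC.
- by move=> t; apply: FG; exists t.
Qed.

Lemma pa_cls L (M : structure L) U n m (A : nat -> 'I_n -> M) (B : nat -> 'I_m -> M) :
  pair_assign (M := Ustruct M U) (fun i => cls U (fun k => A k i)) (fun j => cls U (fun k => B k j))
  = valU U (fun k => pair_assign (A k) (B k)).
Proof.
apply: boolp.functional_extensionality_dep => j; rewrite /pair_assign /valU.
by case: insub => [i|] //; case: insub.
Qed.

Lemma sop_of_chains L (T : formula L -> Prop) (M : structure L) (HM : models M T)
  n' m' (th : formula L) (Hv : has_vars th n' m')
  (FC : forall K, exists c : nat -> 'I_m' -> M, forall t, t < K ->
     (forall A : 'I_n' -> M, holds2 th A (c t) -> holds2 th A (c t.+1)) /\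
     (exists A : 'I_n' -> M, holds2 th A (c t.+1) /\ ~ holds2 th A (c t))) : SOP T.
Proof.
have [U [US UI U0 UU Ucof]] := ultra_exists.
have LOS := los US UI U0 UU Ucof.
pose CH K := proj1_sig (boolp.constructive_indefinite_description (FC K)).
have CHP K : forall t, t < K ->
     (forall A : 'I_n' -> M, holds2 th A (CH K t) -> holds2 th A (CH K t.+1)) /\
     (exists A : 'I_n' -> M, holds2 th A (CH K t.+1) /\ ~ holds2 th A (CH K t)).
  by rewrite /CH; case: boolp.constructive_indefinite_description.
exists n', m', th; split=> //.
exists (Ustruct M U); split.
  move=> ps Hps v.
  have -> : v = valU U (fun k j => rep (v j) k).
    apply: boolp.functional_extensionality_dep => j.
    by rewrite /valU -{1}(cls_rep (v j)).
  by apply/LOS; apply: (US _ _ _ (Ucof 0)) => k _; apply: HM.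
pose c : nat -> 'I_m' -> Ustruct M U := fun t j => cls U (fun k => CH k t j).
have Hh : forall (t : nat) (W : nat -> 'I_n' -> M),
    holds2 (M := Ustruct M U) th (fun i => cls U (fun k => W k i)) (c t) <-> U (fun k => holds2 th (W k) (CH k t)).
  by move=> t W; rewrite /holds2 /c pa_cls LOS.
have Arep : forall A : 'I_n' -> Ustruct M U, A = fun i => cls U (fun k => rep (A i) k).
  move=> A; apply: boolp.functional_extensionality_dep => i.
  by rewrite -{1}(cls_rep (A i)).
exists c => t; split.
  move=> A; rewrite (Arep A) !Hh => H.
  apply: (US _ _ _ (UI _ _ H (Ucof t))) => k [H1 H2].
  by apply: (proj1 (CHP k t H2)).
pose W k := match boolp.pselect (t < k) with
  | left H => proj1_sig (boolp.constructive_indefinite_description (proj2 (CHP k t H)))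
  | right _ => fun _ : 'I_n' => witness M end.
have WP : forall k, t < k -> holds2 th (W k) (CH k t.+1) /\ ~ holds2 th (W k) (CH k t).
  move=> k Hk; rewrite /W; case: boolp.pselect => // H.
  by case: boolp.constructive_indefinite_description.
exists (fun i => cls U (fun k => W k i)); rewrite !Hh; split.
  by apply: (US _ _ _ (Ucof t)) => k /WP [].
move=> H; apply: U0; apply: (US _ _ _ (UI _ _ H (Ucof t))) => k [H1 /WP [_ H2]].
exact: H2.
Qed.

Fixpoint allw N : seq (seq bool) :=
  if N is N'.+1 then map (cons true) (allw N') ++ map (cons false) (allw N') else [:: [::]].

Lemma allwP N z : size z = N -> z \in allw N.
Proof.
elim: N z => [|N IH] [|x z] //= [Hz].
by rewrite mem_cat; case: x; rewrite map_f ?orbT // IH.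
Qed.

Lemma ramsey_list N (R : seq bool -> seq nat -> Prop) (zs : seq (seq bool)) :
  exists g, incr g /\ forall z, z \in zs -> homog N (R z) g.
Proof.
elim: zs => [|z zs [g [Hg H]]]; first by exists id; split.
have [h [Hh Hz]] := ramsey N (fun s => R z (map g s)).
exists (g \o h); split; first exact: incr_comp.
move=> z'; rewrite inE => /orP [/eqP ->|/H Hz']; last exact: homog_comp.
by case: Hz => c Hc; exists c => s Hs; rewrite map_comp; apply: Hc.
Qed.

Unset Implicit Arguments.
Set Strict Implicit.

Theorem theorem2p6 (L : signature) (T : formula L -> Prop) (n m : nat)
  (phi : formula L) (M : structure L)
  (a : nat -> 'I_n -> M) (b : nat -> 'I_m -> M) (N : nat) (E : {set 'I_N}) :
  complete_theory T -> has_vars phi n m -> models M T ->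
  (forall s : 'I_N -> nat, (forall k l : 'I_N, k < l -> s k < s l) ->
     ~ (exists y : 'I_m -> M, forall k : 'I_N,
          (k \in E -> holds2 phi (a (s k)) y) /\
          (k \notin E -> ~ holds2 phi (a (s k)) y))) ->
  (forall i j : nat, holds2 phi (a i) (b j) <-> i < j) ->
  SOP T.
Proof.
move=> _ Hvars HM Hi Hab.
have [g [Hg Hhom]] := ramsey_list N (fun z s => Real m phi a z s) (allw N).
pose RR z := Real m phi a z (map g (iota 0 N)).
have goodI : good N (iota 0 N) by rewrite /good size_iota eqxx iota_ltn_sorted.
have HR : forall z, size z = N -> forall s, good N s -> (Real m phi a z (map g s) <-> RR z).
  move=> z Hz s Hs; have [c Hc] := Hhom z (allwP Hz).
  by rewrite Hc // /RR Hc.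
pose w := [seq k \in E | k <- enum 'I_N].
have Hw : size w = N by rewrite size_map size_enum_ord.
have nRw : ~ RR w.
  move=> [y Hy]; apply: (Hi (fun k => g k)); first by move=> k l /Hg.
  exists y => k; have := Hy k; rewrite Hw ltn_ord => /(_ isT).
  rewrite nth_mapg // (nth_map k) ?size_enum_ord // nth_ord_enum => H.
  by split=> Hk; [apply/H|move/H; rewrite (negbTE Hk)].
have [u [v [Hsz Hn Hr]]] := find_unreal
   (fun z Hz Hs => real_sorted Hab Hg Hs Hz) (leqnn (inv w)) Hw nRw.
have Hsz1 : size (u ++ true :: false :: v) = N by rewrite -Hsz !size_cat.
apply: (sop_of_chains HM (@theta_vars L n m phi Hvars (size (u ++ false :: true :: v)) (size u) (u ++ true :: true :: v))).
move=> K.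
exists (fun t (o : 'I_(size (u ++ false :: true :: v) * n)) => Pn Hab g u K t o).
move=> t HtK.
have Hun : forall s, good (size (u ++ false :: true :: v)) s ->
    ~ Real m phi a (u ++ false :: true :: v) (map g s).
  by move=> s; rewrite Hsz => Hs; rewrite (HR _ Hsz s Hs).
have Hre : forall s, good (size (u ++ false :: true :: v)) s ->
    Real m phi a (u ++ true :: false :: v) (map g s).
  by move=> s; rewrite Hsz => Hs; rewrite (HR _ Hsz1 s Hs).
have [H1 [Y [HY1 HY2]]] := chain_step Hun Hre HtK.
split.
  by move=> A; rewrite !(Cset_theta Hvars Hab); apply: H1.
by exists Y; rewrite !(Cset_theta Hvars Hab).
Qed.
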